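(* Let $G$ and $H$ be finitely generated groups, let $f:G\to H$ be a surjective homomorphism, and let $S=(g_1,\dots,g_n)\in\Gamma_n(G)$. Then: (1) if $\Gamma_n(H,f(S))$ has exponential growth, where $f(S)=(f(g_1),\dots,f(g_n))$, then $\Gamma_n(G,S)$ has exponential growth; (2) if some connected component of $\Gamma_m(H)$ has exponential growth, then $\Gamma_{n+m}(G,S)$ has exponential growth; (3) if $H$ has exponential Nielsen growth, then $G$ has exponential Nielsen growth.
   Context: For a group $G$, a generating $n$-tuple is $(g_1,\dots,g_n)\in G^n$ with $G=\langle g_1,\dots,g_n\rangle$. The product replacement graph $\Gamma_n(G)$ has vertices the generating $n$-tuples, with edges from $(g_1,\dots,g_n)$ to each tuple obtained by replacing $g_j$ by $g_jg_i^{\pm1}$ or $g_i^{\pm1}g_j$, for every ordered pair $i\neq j$. For $S=(g_1,\dots,g_n)\in\Gamma_n(G)$ and $m\ge0$, $S^{(m)}=(g_1,\dots,g_n,1,\dots,1)\in\Gamma_{n+m}(G)$ and $\Gamma_{n+m}(G,S)$ is the connected component of $\Gamma_{n+m}(G)$ containing $S^{(m)}$ (so $\Gamma_n(G,S)$ is the component containing $S$). For a graph $\Gamma$ and vertex $v$, $B_\Gamma(v,r)$ is the set of vertices at path distance at most $r$ from $v$; a graph has exponential growth from $v$ if $|B_\Gamma(v,r)|\ge\alpha^r$ for some $\alpha>1$ and all sufficiently large $r$; a connected graph has exponential growth if it has exponential growth from some (equivalently every) vertex. $G$ has exponential Nielsen growth if $\Gamma_n(G,S)$ has exponential growth for some $n$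 and some generating $n$-tuple $S$. *)

(* Defs.v *)
From Stdlib Require Import Reals.
From mathcomp Require Import all_boot.

Set Implicit Arguments.
Unset Strict Implicit.
Unset Printing Implicit Defensive.

Record group := Group {
  carrier :> Type;
  gmul : carrier -> carrier -> carrier;
  ginv : carrier -> carrier;
  gone : carrier;
  gmulA : forall x y z, gmul x (gmul y z) = gmul (gmul x y) z;
  gmul1 : forall x, gmul gone x = x;
  gmulV : forall x, gmul (ginv x) x = gone
}.

Arguments gone {g}.

Inductive in_gen (G : group) (A : G -> Prop) : G -> Prop :=
| gen_base x : A x -> in_gen A x
| gen_one : in_gen A gone
| gen_mul x y : in_gen A x -> in_gen A y -> in_gen A (gmul x y)
| gen_inv x : in_gen A x -> in_gen A (ginv x).

Definition finitely_generated (G : group) : Prop :=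
  exists s : seq G, forall x : G, in_gen (fun y => List.In y s) x.

Definition is_hom (G H : group) (f : G -> H) : Prop :=
  forall x y, f (gmul x y) = gmul (f x) (f y).

Definition surj (G H : group) (f : G -> H) : Prop :=
  forall y, exists x, f x = y.

Definition tup (G : group) (n : nat) := 'I_n -> G.

Definition generating (G : group) n (S : tup G n) : Prop :=
  forall x : G, in_gen (fun y => exists i, S i = y) x.

Definition upd (G : group) n (S : tup G n) (j : 'I_n) (x : G) : tup G n :=
  fun k => if k == j then x else S k.

Definition gpow (G : group) (x : G) (e : bool) : G := if e then x else ginv x.

Definition nmove (G : group) n (S T : tup G n) : Prop :=
  exists i j : 'I_n, i != j /\ exists e side : bool,
    T = upd S j (if side then gmul (S j) (gpow (S i) e)
                          else gmul (gpow (S i) e) (S j)).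

Definition pr_edge (G : group) n (S T : tup G n) : Prop :=
  generating S /\ generating T /\ nmove S T.

Inductive dist_le (G : group) n : nat -> tup G n -> tup G n -> Prop :=
| dist_refl r S : generating S -> dist_le r S S
| dist_step r S T U : dist_le r S T -> pr_edge T U -> dist_le r.+1 S U.

Definition ball (G : group) n (v : tup G n) (r : nat) : tup G n -> Prop :=
  fun w => dist_le r v w.

Definition card_ge (T : Type) (A : T -> Prop) (k : nat) : Prop :=
  exists f : 'I_k -> T, injective f /\ forall i, A (f i).

Definition card_geR (T : Type) (A : T -> Prop) (x : R) : Prop :=
  exists k : nat, card_ge A k /\ Rle x (INR k).

Definition exp_growth_from (G : group) n (v : tup G n) : Prop :=
  exists alpha : R, Rlt 1 alpha /\
    exists r0 : nat, forall r : nat, (r0 <= r)%N ->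
      card_geR (ball v r) (pow alpha r).

Definition component (G : group) n (S : tup G n) : tup G n -> Prop :=
  fun w => exists r, dist_le r S w.

Definition comp_exp_growth (G : group) n (S : tup G n) : Prop :=
  exists v, component S v /\ exp_growth_from v.

Definition pad (G : group) n (m : nat) (S : tup G n) : tup G (n + m) :=
  fun k => match fintype.split k with inl i => S i | inr _ => gone end.

Definition exp_nielsen_growth (G : group) : Prop :=
  exists n (S : tup G n), generating S /\ comp_exp_growth S.
Arguments pad {G n} m S.

(* Main.v *)
Require Import Defs.
From Stdlib Require Import Reals.
From mathcomp Require Import all_boot.
From Stdlib Require Import FunctionalExtensionality ClassicalEpsilon.

Set Implicit Arguments.
Unset Strict Implicit.
Unset Printing Implicit Defensive.

Section GroupLemmas.
Variable G : group.
Implicit Types x y z : G.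

Lemma mul_cancel_l x y z : gmul x y = gmul x z -> y = z.
Proof.
move=> e; rewrite -(gmul1 y) -(gmul1 z) -(gmulV x) -!gmulA e //.
Qed.

Lemma gmulVr x : gmul x (ginv x) = gone.
Proof.
rewrite -(gmul1 (gmul x (ginv x))) -(gmulV (ginv x)).
rewrite -gmulA (gmulA (ginv x) x (ginv x)) gmulV gmul1 gmulV //.
Qed.

Lemma gmul1r x : gmul x gone = x.
Proof. by rewrite -(gmulV x) gmulA gmulVr gmul1. Qed.

Lemma inv_uniq x y : gmul x y = gone -> x = ginv y.
Proof.
move=> e; by rewrite -(gmul1r x) -(gmulVr y) gmulA e gmul1.
Qed.

Lemma ginv1 : ginv (gone : G) = gone.
Proof. by rewrite -(gmul1r (ginv gone)) gmulV. Qed.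

Lemma ginvK x : ginv (ginv x) = x.
Proof. symmetry; apply: inv_uniq; exact: gmulVr. Qed.

Lemma ginvM x y : ginv (gmul x y) = gmul (ginv y) (ginv x).
Proof.
symmetry; apply: inv_uniq.
by rewrite -gmulA (gmulA (ginv x)) gmulV gmul1 gmulV.
Qed.
End GroupLemmas.

Section Hom.
Variables (G H : group) (f : G -> H).
Hypothesis hf : is_hom f.

Lemma hom1 : f gone = gone.
Proof.
apply: (@mul_cancel_l _ (f gone)).
by rewrite -hf gmul1 gmul1r.
Qed.

Lemma homV x : f (ginv x) = ginv (f x).
Proof. apply: inv_uniq; by rewrite -hf gmulV hom1. Qed.

Lemma hom_gpow x e : f (gpow x e) = gpow (f x) e.
Proof. case: e => //=; exact: homV. Qed.
End Hom.

Lemma in_gen_sub (G : group) (A B : G -> Prop) x :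
  (forall y, A y -> in_gen B y) -> in_gen A x -> in_gen B x.
Proof.
move=> hAB; elim=> {x} [x /hAB //| |x y _ hx _ hy|x _ hx].
- exact: gen_one.
- exact: gen_mul.
- exact: gen_inv.
Qed.

Lemma nmove_gen (G : group) n (S T : tup G n) :
  generating S -> nmove S T -> generating T.
Proof.
move=> hS [i [j [hij [e [side ->]]]]] x.
apply: (in_gen_sub _ (hS x)) => y [k <-].
case: (eqVneq k j) => [->|hkj].
- set W := upd _ _ _.
  have hWj : W j = (if side then gmul (S j) (gpow (S i) e)
                     else gmul (gpow (S i) e) (S j)) by rewrite /W /upd eqxx.
  have bi : in_gen (fun y => exists i0, W i0 = y) (S i).
    by apply: gen_base; exists i; rewrite /W /upd (negbTE hij).
  have bj : in_gen (fun y => exists i0, W i0 = y) (W j) by apply: gen_base; exists j.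
  have bp : in_gen (fun y => exists i0, W i0 = y) (ginv (gpow (S i) e)).
    apply: gen_inv; move: bi; case: (e) => //= bi; exact: gen_inv.
  clearbody W; move: hWj; case: side => hWj.
  + have -> : S j = gmul (W j) (ginv (gpow (S i) e)).
      by rewrite hWj -gmulA gmulVr gmul1r.
    exact: gen_mul.
  + have -> : S j = gmul (ginv (gpow (S i) e)) (W j).
      by rewrite hWj gmulA gmulV gmul1.
    exact: gen_mul.
- apply: gen_base; exists k; by rewrite /upd (negbTE hkj).
Qed.

Lemma dist_gen (G : group) n r (S T : tup G n) :
  dist_le r S T -> generating S /\ generating T.
Proof.
elim=> // r0 S0 T0 U _ [h1 _] [_ [h2 _]]; by split.
Qed.

Lemma card_ge_lift (A : Type) (B : Type) (P : A -> Prop) (Q : B -> Prop)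
  (p : A -> B) k :
  (forall y, Q y -> exists x, P x /\ p x = y) -> card_ge Q k -> card_ge P k.
Proof.
move=> hl [g [ginj hg]].
have hc : forall i, {x | P x /\ p x = g i}.
  move=> i; apply: constructive_indefinite_description; exact: hl.
exists (fun i => proj1_sig (hc i)); split.
- move=> i j e; apply: ginj.
  by rewrite -(proj2 (proj2_sig (hc i))) -(proj2 (proj2_sig (hc j))) e.
- move=> i; exact: (proj1 (proj2_sig (hc i))).
Qed.

Lemma growth_lift (G H : group) n m (v : tup G n) (w : tup H m)
  (p : tup G n -> tup H m) :
  (forall r y, ball w r y -> exists x, ball v r x /\ p x = y) ->
  exp_growth_from w -> exp_growth_from v.
Proof.
move=> hl [a [ha [r0 hr]]]; exists a; split => //; exists r0 => r hr0.
have [k [hk hle]] := hr r hr0; exists k; split => //.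
exact: (card_ge_lift (p := p) (hl r) hk).
Qed.

Lemma lift1 (G H : group) (f : G -> H) (hf : is_hom f) n r (V : tup G n) w' :
  generating V -> dist_le r (fun k => f (V k)) w' ->
  exists w, dist_le r V w /\ (fun k => f (w k)) = w'.
Proof.
move=> hV hd; remember (fun k => f (V k)) as V' eqn:eV.
elim: hd eV => [r0 S0 _ ->|r0 S0 T U _ IH [_ [_ hm]] eV].
- exists V; split => //. exact: (Defs.dist_refl r0 hV).
- have [W [hW eW]] := IH eV; subst T.
  case: hm => [i [j [hij [e [side eU]]]]].
  set y := (if side then gmul (W j) (gpow (W i) e) else gmul (gpow (W i) e) (W j)).
  have hm : nmove W (upd W j y) by exists i, j; split => //; exists e, side.
  have [_ hWg] := dist_gen hW.
  exists (upd W j y); split.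
  + apply: dist_step hW _; split => //; split => //; exact: nmove_gen hm.
  + rewrite eU; apply: functional_extensionality => k; rewrite /upd.
    case: (k == j) => //; rewrite /y; case: (side); by rewrite hf hom_gpow.
Qed.

Section Part2.
Variables (G H : group) (f : G -> H) (hf : is_hom f) (n m : nat) (S : tup G n).
Hypothesis hS : generating S.

Definition blk (x : tup G m) : tup G (n + m) :=
  fun k => match fintype.split k with inl i => S i | inr j => x j end.

Lemma blk_l x i : blk x (lshift m i) = S i.
Proof. by rewrite /blk (unsplitK (inl i)). Qed.

Lemma blk_r x j : blk x (rshift n j) = x j.
Proof. by rewrite /blk (unsplitK (inr j)). Qed.

Lemma blk_gen x : generating (blk x).
Proof.
move=> z; apply: (in_gen_sub _ (hS z)) => y [i <-].
apply: gen_base; exists (lshift m i); exact: blk_l.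
Qed.

Lemma blk_upd x j y : upd (blk x) (rshift n j) y = blk (upd x j y).
Proof.
apply: functional_extensionality => k; rewrite /upd.
case: (split_ordP k) => i ->.
- by rewrite eq_lrshift !blk_l.
- by rewrite eq_rshift !blk_r.
Qed.

Lemma lift2 r x0 w' : dist_le r (fun k => f (x0 k)) w' ->
  exists x, dist_le r (blk x0) (blk x) /\ (fun k => f (x k)) = w'.
Proof.
move=> hd; remember (fun k => f (x0 k)) as V' eqn:eV.
elim: hd eV => [r0 S0 _ ->|r0 S0 T U _ IH [_ [_ hm]] eV].
- exists x0; split => //; exact: Defs.dist_refl (blk_gen x0).
- have [x [hx ex]] := IH eV; subst T.
  case: hm => [i [j [hij [e [side eU]]]]].
  set y := (if side then gmul (x j) (gpow (x i) e) else gmul (gpow (x i) e) (x j)).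
  exists (upd x j y); split.
  + apply: dist_step hx _; split; first exact: blk_gen.
    split; first exact: blk_gen.
    exists (rshift n i), (rshift n j); split; first by rewrite eq_rshift.
    exists e, side; by rewrite !blk_r blk_upd.
  + rewrite eU; apply: functional_extensionality => k; rewrite /upd.
    case: (k == j) => //; rewrite /y; case: (side); by rewrite hf hom_gpow.
Qed.

Definition reach (W : tup G (n + m)) := exists r, dist_le r (blk (fun _ => gone)) W.

Lemma reach_step x j g b : reach (blk x) ->
  reach (blk (upd x j (gmul (x j) (gpow (S g) b)))).
Proof.
move=> [r hr]; exists r.+1; apply: dist_step hr _.
split; first exact: blk_gen. split; first exact: blk_gen.
exists (lshift m g), (rshift n j); split; first by rewrite eq_lrshift.
exists b, true; by rewrite blk_l blk_r blk_upd.
Qed.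

Lemma upd_upd (x : tup G m) j a b : upd (upd x j a) j b = upd x j b.
Proof.
apply: functional_extensionality => k; rewrite /upd; by case: (k == j).
Qed.

Lemma upd_same (x : tup G m) j : upd x j (x j) = x.
Proof.
apply: functional_extensionality => k; rewrite /upd; by case: eqP => [->|].
Qed.

Lemma upd_at (x : tup G m) j a : upd x j a j = a.
Proof. by rewrite /upd eqxx. Qed.

Lemma reach_gen g : in_gen (fun y => exists i, S i = y) g ->
  forall x j, reach (blk x) ->
   reach (blk (upd x j (gmul (x j) g))) /\
   reach (blk (upd x j (gmul (x j) (ginv g)))).
Proof.
elim=> {g} [g [i <-]| |a b _ IHa _ IHb|a _ IHa] x j hx.
- split; [exact: (reach_step j i true hx)|exact: (reach_step j i false hx)].
- by rewrite ginv1 gmul1r upd_same.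
- split.
  + have [h1 _] := IHa x j hx.
    have [h2 _] := IHb _ j h1.
    by rewrite upd_upd upd_at -gmulA in h2.
  + have [_ h1] := IHb x j hx.
    have [_ h2] := IHa _ j h1.
    by rewrite upd_upd upd_at -gmulA -ginvM in h2.
- have [h1 h2] := IHa x j hx; split => //; by rewrite ginvK.
Qed.

Lemma reach_all k : forall x : tup G m,
  (forall j : 'I_m, (k <= j)%N -> x j = gone) -> reach (blk x).
Proof.
elim: k => [|k IH] x hx.
- have -> : x = (fun _ => gone) by apply: functional_extensionality => j; exact: hx.
  exists 0; exact: Defs.dist_refl (blk_gen _).
- case: (ltnP k m) => hk.
  + set x' : tup G m := fun j => if (k <= j)%N then gone else x j.
    have hx' : reach (blk x') by apply: IH => j hj; rewrite /x' hj.
    set jk : 'I_m := Ordinal hk.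
    have [h _] := reach_gen (hS (x jk)) jk hx'.
    suff -> : x = upd x' jk (gmul (x' jk) (x jk)) by [].
    apply: functional_extensionality => j; rewrite /upd /x'.
    case: eqP => [->|hj]; first by rewrite /= leqnn gmul1.
    case: leqP => // hkj; apply: hx.
    have : (j : nat) != k by apply/eqP => e; apply: hj; apply: val_inj.
    rewrite neq_ltn => /orP [] // h'; by rewrite ltnNge hkj in h'.
  + apply: IH => j hj; exfalso; have := ltn_ord j.
    by rewrite ltnNge (leq_trans hk hj).
Qed.
End Part2.

Lemma surj_choice (G H : group) (f : G -> H) : surj f ->
  exists g : H -> G, forall y, f (g y) = y.
Proof.
move=> hs; exists (fun y => proj1_sig (constructive_indefinite_description _ (hs y))).
move=> y; exact: proj2_sig (constructive_indefinite_description _ (hs y)).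
Qed.

Lemma In_nth_seq (T : Type) (d : T) (s : seq T) y : List.In y s ->
  exists k, (k < size s)%N /\ nth d s k = y.
Proof.
elim: s => //= a s IH [->|h]; first by exists 0.
have [k [h1 h2]] := IH h; by exists k.+1.
Qed.

Theorem proposition3p5 (G H : group) (f : G -> H) :
  finitely_generated G -> finitely_generated H ->
  is_hom f -> surj f ->
  (forall (n : nat) (S : tup G n), generating S ->
     (comp_exp_growth (fun i => f (S i)) -> comp_exp_growth S) /\
     (forall (m : nat),
        (exists T : tup H m, generating T /\ comp_exp_growth T) ->
        comp_exp_growth (pad m S)))
  /\ (exp_nielsen_growth H -> exp_nielsen_growth G).
Proof.
move=> [s hs] _ hf hsurj.
have P2 : forall (n : nat) (S : tup G n), generating S -> forall (m : nat),
        (exists T : tup H m, generating T /\ comp_exp_growth T) ->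
        comp_exp_growth (pad m S).
  move=> n S hS m [T [_ [v [_ hv]]]].
  have [g hg] := surj_choice hsurj.
  set x0 : tup G m := fun k => g (v k).
  have ev : (fun k => f (x0 k)) = v by apply: functional_extensionality => k; exact: hg.
  exists (blk S x0); split.
  - have [r hr] := reach_all (k := m) (x := x0) hS (fun j hj => ltac:(exfalso; have := ltn_ord j; by rewrite ltnNge hj)).
    exists r; exact: hr.
  - apply: (growth_lift (p := fun w k => f (w (rshift n k)))) hv => r y hy.
    rewrite /ball -ev in hy.
    have [x [hx ex]] := lift2 hf hS hy.
    exists (blk S x); split => //.
    rewrite -ex; apply: functional_extensionality => k; by rewrite blk_r.
split.
- move=> n S hS; split; last exact: P2.
  move=> [v' [[r hr] hv']].
  have [v [hv ev]] := lift1 hf hS hr.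
  exists v; split; first by exists r.
  have [_ hvg] := dist_gen hv.
  apply: (growth_lift (p := fun w k => f (w k))) hv' => r0 y hy.
  rewrite /ball -ev in hy.
  have [w [hw ew]] := lift1 hf hvg hy.
  by exists w.
- move=> [m [T [hT hTg]]].
  set S : tup G (size s) := fun i => nth gone s i.
  have hS : generating S.
    move=> x; apply: (in_gen_sub _ (hs x)) => y hy; apply: gen_base.
    have [k [hk2 hk']] := In_nth_seq gone hy.
    by exists (Ordinal hk2).
  exists (size s + m), (pad m S); split.
  + move=> z; apply: (in_gen_sub _ (hS z)) => y [i <-].
    apply: gen_base; exists (lshift m i); by rewrite /pad (unsplitK (inl i)).
  + apply: P2 => //; by exists T.
Qed.
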